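(* Let $G$ be a triadic simplicial complex, let $s$ be a labeling of the edges of $G$ by $\pm 1$, and let $\overline{s}$ be the configuration on the triadic dual $T_{3}(G)$ that places a ball on exactly those vertices of $T_{3}(G)$ corresponding to imbalanced triangles of $G$ under $s$. Then the nondeterministic triad dynamics on $G$ started from $s$ corresponds to the hyperedge switching process on $T_{3}(G)$ started from $\overline{s}$: flipping the sign of an edge $e$ of $G$ is a legal move of the triad dynamics if and only if choosing the hyperedge $l_{e}$ of $T_{3}(G)$ corresponding to $e$ is a legal move of the hyperedge switching process, and in that case the set of imbalanced triangles after the flip is exactly the set of vertices of $T_{3}(G)$ carrying a ball after switching $l_{e}$.
   Context: A triangle of a graph whose edges are labeled $\pm 1$ is balanced if the product of its three labels is $1$, imbalanced otherwise. Nondeterministic triad dynamics: at each step, for some imbalanced triangle $T$, the sign of an arbitrary edge of $T$ is changed (this may change the balance of other triangles containing that edge). A triadic simplicial complex is a graph in which every edge lies in some triangle. The triadic dual $T_{3}(G)$ is the hypergraph (self-loops, i.e. one-vertex hyperedges, allowed) whose vertices are the triangles of $G$ and which has, for each edge $e$ of $G$, a hyperedge $l_e$ consisting of all triangles of $G$ containing $e$ (so if $e$ lies in a unique triangle $T$, $l_e$ is a self-loop at $T$; a vertex may carry two self-loops). Hyperedge switching process on a hypergraph: some vertices carry a ball; at each step one chooses a hyperedge $C$ that contains at least one vertex carrying a ball (a self-loop at an occupied vertex qualifies), and then puts balls on all empty vertices of $C$ and removes the balls from all occupied vertices of $C$. *)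

(* Defs.v *)
From mathcomp Require Import all_boot all_algebra.
Set Implicit Arguments. Unset Strict Implicit. Unset Printing Implicit Defensive.
Import GRing.Theory.
Local Open Scope ring_scope.

Section Defs.
Variable V : finType.

Definition simple_graph (adj : rel V) : Prop :=
  symmetric adj /\ irreflexive adj.

Definition is_edge (adj : rel V) (e : {set V}) : bool :=
  [exists x, exists y, adj x y && (e == [set x; y])].

Definition is_triangle (adj : rel V) (t : {set V}) : bool :=
  [exists x, exists y, exists z,
     [&& adj x y, adj y z, adj x z & t == [set x; y; z]]].

Definition tri_edges (adj : rel V) (t : {set V}) : {set {set V}} :=
  [set f | is_edge adj f & f \subset t].

Definition triadic (adj : rel V) : Prop :=
  forall e, is_edge adj e -> exists t, is_triangle adj t && (e \subset t).

(* A +-1 labeling of the edges (values off edges are irrelevant). *)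
Definition pm1_labeling (adj : rel V) (s : {set V} -> int) : Prop :=
  forall e, is_edge adj e -> s e = 1 \/ s e = -1.

Definition balanced (adj : rel V) (s : {set V} -> int) (t : {set V}) : bool :=
  (\prod_(f in tri_edges adj t) s f) == 1.

Definition imbalanced_set (adj : rel V) (s : {set V} -> int) : {set {set V}} :=
  [set t | is_triangle adj t & ~~ balanced adj s t].

Definition flip (s : {set V} -> int) (e : {set V}) : {set V} -> int :=
  fun f => if f == e then - s e else s f.

Definition triad_legal (adj : rel V) (s : {set V} -> int) (e : {set V}) : Prop :=
  exists t, [&& is_triangle adj t, ~~ balanced adj s t & e \in tri_edges adj t].

Definition T3_vertices (adj : rel V) : {set {set V}} := [set t | is_triangle adj t].
Definition T3_hyperedge (adj : rel V) (e : {set V}) : {set {set V}} :=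
  [set t | is_triangle adj t & e \subset t].

Definition config_of (adj : rel V) (s : {set V} -> int) : {set {set V}} :=
  imbalanced_set adj s.
End Defs.

Definition hyper_legal (W : finType) (occ C : {set W}) : Prop :=
  exists v, (v \in C) && (v \in occ).
Definition hyper_switch (W : finType) (occ C : {set W}) : {set W} :=
  (occ :\: C) :|: (C :\: occ).

(* Main.v *)
Require Import Defs.
From mathcomp Require Import all_boot all_algebra.
Import GRing.Theory.
Local Open Scope ring_scope.

Section H.
Variable V : finType.

Lemma prod_pm1 (s : {set V} -> int) (A : {set {set V}}) :
  (forall f, f \in A -> s f = 1 \/ s f = -1) ->
  \prod_(f in A) s f = 1 \/ \prod_(f in A) s f = -1.
Proof.
move=> H; apply: (big_ind (fun x : int => x = 1 \/ x = -1)).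
- by left.
- by move=> x y [->|->] [->|->]; rewrite ?mulr1 ?mul1r ?mulrNN ?mulr1; auto.
- exact: H.
Qed.

Lemma prod_flip_in (s : {set V} -> int) (A : {set {set V}}) e :
  e \in A -> \prod_(f in A) flip s e f = - \prod_(f in A) s f.
Proof.
move=> eA; rewrite (bigD1 e) //= [in RHS](bigD1 e) //= /flip eqxx mulNr.
congr (- (_ * _)); apply: eq_bigr => f /andP [_ fe].
by rewrite (negbTE fe).
Qed.

Lemma prod_flip_out (s : {set V} -> int) (A : {set {set V}}) e :
  e \notin A -> \prod_(f in A) flip s e f = \prod_(f in A) s f.
Proof.
move=> eA; apply: eq_bigr => f fA; rewrite /flip.
by case: eqP => // fe; rewrite -fe fA in eA.
Qed.
End H.

Theorem lemma1 (V : finType) (adj : rel V) (s : {set V} -> int)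
  (Hg : simple_graph adj) (Htri : triadic adj) (Hs : pm1_labeling adj s)
  (e : {set V}) (He : is_edge adj e) :
  (triad_legal adj s e <->
     hyper_legal (config_of adj s) (T3_hyperedge adj e)) /\
  (triad_legal adj s e ->
     imbalanced_set adj (flip s e) =
       hyper_switch (config_of adj s) (T3_hyperedge adj e)).
Proof.
split.
  split.
    move=> [t /and3P [Ht Hb Het]]; exists t.
    move: Het; rewrite /tri_edges inE => /andP [_ Hsub].
    by rewrite /T3_hyperedge /config_of /imbalanced_set !inE Ht Hb Hsub.
  move=> [t /andP []]; rewrite /T3_hyperedge /config_of /imbalanced_set !inE.
  move=> /andP [Ht Hsub] /andP [_ Hb]; exists t.
  by rewrite Ht Hb /tri_edges inE He Hsub.
move=> _; apply/setP => t.
rewrite /hyper_switch /config_of /imbalanced_set /T3_hyperedge !inE.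
case Ht: (is_triangle adj t) => //=; rewrite ?andbF //.
rewrite /balanced.
have Hpm : \prod_(f in tri_edges adj t) s f = 1 \/ \prod_(f in tri_edges adj t) s f = -1.
  apply: prod_pm1 => f; rewrite /tri_edges inE => /andP [Hf _]; exact: Hs.
case Hsub: (e \subset t) => /=.
  rewrite prod_flip_in; last by rewrite /tri_edges inE He Hsub.
  by case: Hpm => ->.
rewrite prod_flip_out; last by rewrite /tri_edges inE He Hsub.
by rewrite ?andbT ?andbF ?orbF ?andbT.
Qed.
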